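(* Let $A$ be a finite nonempty alphabet and $\zeta:A^\omega\to A^\omega$ a bijective $\omega$-sequential function. Then for every finite word $u\in A^*$ the remainder $\zeta_u$ is a bijection.
   Context: For an infinite word $z$, $z[0,n]$ is its prefix of length $n$. A map $\zeta:A^\omega\to A^\omega$ is $\omega$-sequential if whenever a finite word $u$ is a common prefix of $x$ and $y$, then $\zeta(x)[0,|u|]=\zeta(y)[0,|u|]$. For such $\zeta$ and $u\in A^*$, one has $\zeta(ux)=\epsilon(u)\zeta_u(x)$ for all $x\in A^\omega$, where $\epsilon(u)=\zeta(ux)[0,|u|]$ does not depend on $x$ and $\zeta_u:A^\omega\to A^\omega$; $\zeta_u$ is called the remainder of $\zeta$ for $u$. *)

(* Defs.v *)
From mathcomp Require Import all_boot.
Set Implicit Arguments. Unset Strict Implicit. Unset Printing Implicit Defensive.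

Definition iword (A : Type) := nat -> A.

Definition pref (A : Type) (z : iword A) (n : nat) : seq A := mkseq z n.

Definition icat (A : Type) (u : seq A) (x : iword A) : iword A :=
  fun n => if n < size u then nth (x 0) u n else x (n - size u).

Definition omega_sequential (A : eqType) (zeta : iword A -> iword A) : Prop :=
  forall (u : seq A) (x y : iword A),
    pref x (size u) = u -> pref y (size u) = u ->
    pref (zeta x) (size u) = pref (zeta y) (size u).

(* The remainder zeta_u : the unique map with zeta (u x) = eps(u) zeta_u(x),
   where eps(u) = zeta(u x)[0,|u|]; i.e. zeta_u(x) is zeta(u x) with its first
   |u| letters dropped. *)
Definition remainder (A : Type) (zeta : iword A -> iword A) (u : seq A)
  : iword A -> iword A :=
  fun x n => zeta (icat u x) (size u + n).

(* Main.v *)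
Require Import Defs.
From mathcomp Require Import all_boot.
From Stdlib Require Import FunctionalExtensionality.

Lemma surj_inj_fin (T : finType) (F : T -> T) :
  (forall s, exists t, F t = s) -> injective F.
Proof.
move=> hs x y.
have : #|[seq F z | z in T]| == #|T|.
  rewrite eqn_leq max_card /=.
  apply: subset_leq_card; apply/subsetP => s _.
  have [t <-] := hs s; exact: image_f.
move/image_injP => hi; exact: hi.
Qed.

Lemma icat_drop (A : Type) (u : seq A) x n : icat u x (size u + n) = x n.
Proof. by rewrite /icat ltnNge leq_addr /= addKn. Qed.

Lemma icat_lt (A : Type) (u : seq A) x i : i < size u -> icat u x i = nth (x 0) u i.
Proof. by rewrite /icat => ->. Qed.

Lemma pref_icat (A : Type) (u : seq A) x : pref (icat u x) (size u) = u.
Proof.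
apply: (@eq_from_nth _ (x 0)); first by rewrite size_mkseq.
move=> i; rewrite size_mkseq => hi; by rewrite nth_mkseq // icat_lt.
Qed.

Lemma pref_nth (A : Type) (z : iword A) n i d : i < n -> nth d (pref z n) i = z i.
Proof. move=> hi; by rewrite nth_mkseq. Qed.

Theorem lemma4p6 (A : finType) (hA : 0 < #|A|) (zeta : iword A -> iword A) :
  omega_sequential zeta -> bijective zeta ->
  forall u : seq A, bijective (remainder zeta u).
Proof.
move=> hseq [g gK Kg] u.
set n := size u.
pose a0 : A := enum_val (Ordinal hA).
pose c : iword A := fun _ => a0.
have nthmk : forall (f : iword A) j, j < n -> nth a0 [tuple f i | i < n] j = f j.
  move=> f j hj; by rewrite -[j]/(nat_of_ord (Ordinal hj)) -tnth_nth tnth_mktuple.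
have K : forall x (t : n.-tuple A), (forall i, i < n -> x i = nth a0 t i) ->
    forall i, i < n -> zeta x i = zeta (icat t c) i.
  move=> x t hx i hi.
  have e1 : pref x (size t) = t.
    apply: (@eq_from_nth _ a0); first by rewrite size_mkseq.
    move=> j; rewrite size_mkseq size_tuple => hj.
    by rewrite pref_nth ?size_tuple // hx.
  have := hseq t x (icat t c) e1 (@pref_icat _ _ _).
  rewrite size_tuple => e2.
  by rewrite -(@pref_nth _ (zeta x) _ _ a0 hi) e2 pref_nth.
pose F (t : n.-tuple A) : n.-tuple A := [tuple zeta (icat t c) i | i < n].
have Finj : injective F.
  apply: surj_inj_fin => s.
  pose x := g (icat s c).
  exists [tuple x i | i < n]; apply: eq_from_tnth => i.
  rewrite !tnth_mktuple -(K x) //.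
    by rewrite /x Kg icat_lt ?size_tuple // -tnth_nth.
  by move=> j hj; rewrite nthmk.
have pK : forall y, (forall i, i < n -> zeta y i = zeta (icat u c) i) ->
    forall i, i < n -> y i = nth a0 u i.
  move=> y hy.
  have hF : F [tuple y i | i < n] = F (in_tuple u).
    apply: eq_from_tnth => i; rewrite !tnth_mktuple.
    rewrite -(K y) //; last by move=> j hj; rewrite nthmk.
    by rewrite hy.
  move=> i hi; have := congr1 (fun t => tnth t (Ordinal hi)) (Finj _ _ hF).
  by rewrite tnth_mktuple (tnth_nth a0).
pose e := zeta (icat u c).
pose r (w : iword A) : iword A := fun k => g (fun m => if m < n then e m else w (m - n)) (n + k).
have rinv : forall w, icat u (r w) = g (fun m => if m < n then e m else w (m - n)).
  move=> w; apply: functional_extensionality => m.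
  rewrite /icat; case: ifP => hm.
    rewrite (set_nth_default a0) // -(pK (g (fun m => if m < n then e m else w (m - n))) _ m hm) //.
    by move=> i hi; rewrite Kg hi.
  rewrite /r; congr (g _ _); rewrite subnKC //; by rewrite leqNgt hm.
exists r.
- move=> x.
  have hi : injective (remainder zeta u).
    move=> x1 x2 h.
    have h2 : zeta (icat u x1) = zeta (icat u x2).
      apply: functional_extensionality => m.
      case: (ltnP m n) => hm.
        have := hseq u (icat u x1) (icat u x2) (@pref_icat _ _ _) (@pref_icat _ _ _).
        move/(congr1 (fun s => nth a0 s m)); by rewrite !pref_nth.
      rewrite -(subnKC hm).
      exact: (congr1 (fun f => f (m - n)) h).
    have h3 := congr1 g h2; rewrite !gK in h3.
    apply: functional_extensionality => k.
    by rewrite -(@icat_drop _ u x1) -(@icat_drop _ u x2) h3.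
  apply: hi; apply: functional_extensionality => k.
  rewrite /remainder rinv Kg /= ltnNge leq_addr /= addKn.
  done.
- move=> w; apply: functional_extensionality => k.
  rewrite /remainder rinv Kg /= ltnNge leq_addr /= addKn //.
Qed.
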